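(* The utilization-based dynamic posted-price (UDPP) mechanism is ex post incentive compatible for myopic bidders and dominant-strategy incentive compatible for myopic miners.
   Context: Dynamic posted-price setting: at each time step a block with $m$ slots is produced by an active miner; $n$ bidders with private values $v_i\ge 0$ submit bids $b_i$, each participating only once. Given the current posted price $q>0$, the eligible set is $M(q)=\{i:b_i\ge q\}$. A block is a set $B\subseteq M(q)$ with $|B|\le m$; each $i\in B$ receives a slot and pays $q$. The next price is $T(q,B)$. The UDPP mechanism uses the random maximal (RM) allocation rule — the miner selects $B$ uniformly at random among subsets of $M(q)$ of size $\min\{m,|M(q)|\}$ — and the update rule $T_U(q,B)=\alpha\frac{|B|}{m}(1+\delta)q+(1-\alpha)q$ with $\alpha\in(0,1)$, $\delta\in(0,\infty)$. A myopic bidder's utility is $v_i-q$ if included and $0$ otherwise (in expectation over allocation randomness); ex post IC for myopic bidders means that, when the miner follows the RM rule, bidding $b_i=v_i$ weakly dominates every other bid for every bidder, for all bids of the others. A myopic miner's utility is the total payment $q|B|$ in the current block; DSIC for myopic miners means following the RM rule is a weakly dominant, utility-maximizing strategy for the miner for all bids. *)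

(* Defs.v *)
From HB Require Import structures.
From mathcomp Require Import all_boot all_order all_algebra.
Set Implicit Arguments. Unset Strict Implicit. Unset Printing Implicit Defensive.
Import Order.TTheory GRing.Theory Num.Theory.
Local Open Scope ring_scope.

Section UDPP.
Variables (R : realFieldType) (n : nat).

Definition bids := 'I_n -> R.

Definition upd_bid (b : bids) (i : 'I_n) (x : R) : bids :=
  fun j => if j == i then x else b j.

Definition eligible (b : bids) (q : R) : {set 'I_n} := [set i | q <= b i].

Definition feasible_block (m : nat) (b : bids) (q : R) (B : {set 'I_n}) : bool :=
  (B \subset eligible b q) && (#|B| <= m)%N.

(* support of the random maximal (RM) rule: subsets of M(q) of size min(m,|M(q)|) *)
Definition rm_blocks (m : nat) (b : bids) (q : R) : {set {set 'I_n}} :=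
  [set B : {set 'I_n} | (B \subset eligible b q) && (#|B| == minn m #|eligible b q|)].

(* expectation of f under the RM rule (uniform on rm_blocks) *)
Definition rm_expect (m : nat) (b : bids) (q : R) (f : {set 'I_n} -> R) : R :=
  (\sum_(B in rm_blocks m b q) f B) / #|rm_blocks m b q|%:R.

Definition bidder_util (q v : R) (i : 'I_n) (B : {set 'I_n}) : R :=
  if i \in B then v - q else 0.

Definition miner_util (q : R) (B : {set 'I_n}) : R := q * #|B|%:R.

Definition T_U (alpha delta : R) (m : nat) (q : R) (B : {set 'I_n}) : R :=
  alpha * (#|B|%:R / m%:R) * (1 + delta) * q + (1 - alpha) * q.

Definition RM_ex_post_IC_bidders (m : nat) (q : R) : Prop :=
  forall (v : bids), (forall i, 0 <= v i) ->
  forall (b : bids) (i : 'I_n) (x : R),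
    rm_expect m (upd_bid b i x) q (bidder_util q (v i) i)
    <= rm_expect m (upd_bid b i (v i)) q (bidder_util q (v i) i).

Definition RM_DSIC_miner (m : nat) (q : R) : Prop :=
  forall (b : bids) (B : {set 'I_n}), feasible_block m b q B ->
    miner_util q B <= rm_expect m b q (miner_util q).

End UDPP.

(* Main.v *)
Require Import Defs.
From HB Require Import structures.
From mathcomp Require Import all_boot all_order all_algebra.
Import Order.TTheory GRing.Theory Num.Theory.
Local Open Scope ring_scope.

Lemma rm_nonempty (R : realFieldType) (n m : nat) (b : bids R n) (q : R) :
  (0 < #|rm_blocks m b q|)%N.
Proof.
have : (minn m #|eligible b q| <= #|eligible b q|)%N by rewrite geq_minr.
move/card_geqP=> [s [us ss sub]].
apply/card_gt0P; exists [set x in s].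
rewrite inE; apply/andP; split.
  by apply/subsetP=> x; rewrite inE => /sub.
by rewrite cardsE (card_uniqP us) ss.
Qed.

Lemma rm_expect_const (R : realFieldType) (n m : nat) (b : bids R n) (q : R)
  (f : {set 'I_n} -> R) (c : R) :
  (forall B, B \in rm_blocks m b q -> f B = c) -> rm_expect m b q f = c.
Proof.
move=> Hf; rewrite /rm_expect (eq_bigr (fun _ => c)) // sumr_const.
have h := @rm_nonempty R n m b q.
rewrite -[c *+ _]mulr_natr mulfK // pnatr_eq0 -lt0n //.
Qed.

Lemma rm_expect_ge0 (R : realFieldType) (n m : nat) (b : bids R n) (q : R)
  (f : {set 'I_n} -> R) :
  (forall B, B \in rm_blocks m b q -> 0 <= f B) -> 0 <= rm_expect m b q f.
Proof.
move=> Hf; rewrite /rm_expect divr_ge0 //.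
by apply: sumr_ge0.
Qed.

Lemma rm_expect_le0 (R : realFieldType) (n m : nat) (b : bids R n) (q : R)
  (f : {set 'I_n} -> R) :
  (forall B, B \in rm_blocks m b q -> f B <= 0) -> rm_expect m b q f <= 0.
Proof.
move=> Hf; rewrite /rm_expect mulr_le0_ge0 //; last by rewrite invr_ge0 ler0n.
by rewrite -oppr_ge0 -sumrN; apply: sumr_ge0 => B HB; rewrite oppr_ge0 Hf.
Qed.

Lemma in_rm_elig (R : realFieldType) (n m : nat) (b : bids R n) (q : R) B i :
  B \in rm_blocks m b q -> i \in B -> q <= b i.
Proof.
rewrite inE => /andP[/subsetP sub _] /sub; by rewrite inE.
Qed.

Arguments rm_nonempty {R n} m b q.
Arguments rm_expect_const {R n m b q f} c.
Arguments rm_expect_ge0 {R n m b q f}.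
Arguments rm_expect_le0 {R n m b q f}.
Arguments in_rm_elig {R n m b q B i}.

Theorem mainTheorem3 (R : realFieldType) (n m : nat) (alpha delta q : R) :
  (0 < m)%N -> 0 < alpha < 1 -> 0 < delta -> 0 < q ->
  RM_ex_post_IC_bidders n m q /\ RM_DSIC_miner n m q.
Proof.
move=> m0 _ _ q0; split.
  move=> v _ b i x.
  have RHS0 : 0 <= rm_expect m (upd_bid b i (v i)) q (bidder_util q (v i) i).
    apply: rm_expect_ge0 => B HB; rewrite /bidder_util.
    case: ifP => // iB; have := in_rm_elig HB iB.
    by rewrite /upd_bid eqxx subr_ge0.
  case: (ltP (v i) q) => vq.
    apply: le_trans RHS0; apply: rm_expect_le0 => B HB; rewrite /bidder_util.
    by case: ifP => // _; rewrite subr_le0 ltW.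
  case: (ltP x q) => xq.
    rewrite (rm_expect_const 0) // => B HB; rewrite /bidder_util.
    case: ifP => // iB; have := in_rm_elig HB iB.
    by rewrite /upd_bid eqxx leNgt xq.
  rewrite /rm_expect /rm_blocks.
  suff -> : eligible (upd_bid b i x) q = eligible (upd_bid b i (v i)) q by [].
  apply/setP=> j; rewrite !inE /upd_bid; case: eqP => // _.
  by rewrite xq vq.
move=> b B /andP[sub cB].
rewrite (rm_expect_const (q * (minn m #|eligible b q|)%:R)); last first.
  by move=> B'; rewrite inE => /andP[_ /eqP]; rewrite /miner_util => ->.
rewrite /miner_util ler_pM2l // ler_nat leq_min cB.
exact: subset_leq_card.
Qed.
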